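(* $R_3(VS)\le 68$: every 3-coloring of $[68]$ contains two integers $a<b$ in $[68]$ of the same color with $b-a$ a positive perfect square.
   Context: For $n\in\mathbb{N}$, $[n]=\{1,\dots,n\}$; a $c$-coloring of $[n]$ is a function $[n]\to[c]$. $R_c(VS)$ (the van der Square number) is the least positive integer $n$ such that every $c$-coloring of $[n]$ contains integers $a<b$ in $[n]$ of the same color with $b-a=x^2$ for some positive integer $x$. *)

(* Defs.v *)
From mathcomp Require Import all_boot.
Set Implicit Arguments. Unset Strict Implicit. Unset Printing Implicit Defensive.

(* A c-coloring of [n] = {1,...,n} is modelled as a function 'I_n -> 'I_c,
   where the ordinal i : 'I_n represents the integer i+1 in [n]. *)

Definition vds_mono (n c : nat) (chi : 'I_n -> 'I_c) : Prop :=
  exists (a b : 'I_n), (a < b)%N /\ chi a = chi b /\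
    exists x : nat, (0 < x)%N /\ (b : nat) - a = x ^ 2.

Definition vds_property (n c : nat) : Prop :=
  forall chi : 'I_n -> 'I_c, vds_mono chi.

(* Main.v *)
Require Import Defs.
From mathcomp Require Import all_boot.
From mathcomp Require Import zify.
From Stdlib Require Import Classical_Prop.

Definition sqs : seq nat := map (fun x => x.+1 ^ 2) (iota 0 8).

Definition okc (c : nat) (l : seq nat) : bool :=
  (fix go (q : seq nat) := if q is s :: q' then (if nth 3 l s.-1 != c then go q' else false) else true) sqs.

Fixpoint refute (fuel : nat) (l : seq nat) : bool :=
  match fuel with
  | 0 => false
  | S f => (if okc 0 l then refute f (0 :: l) else true) &&
            ((if okc 1 l then refute f (1 :: l) else true) &&
            (if okc 2 l then refute f (2 :: l) else true))
  end.

Lemma okcE c l : okc c l = all (fun s => nth 3 l s.-1 != c) sqs.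
Proof. rewrite /okc; elim: sqs => //= s q ->; by case: ifP. Qed.

Lemma refute58 : refute 58 [::] = true.
Proof. vm_compute. reflexivity. Qed.

Section S.
Variable chi : 'I_68 -> 'I_3.
Hypothesis H : ~ vds_mono chi.

Definition fc (i : nat) : nat := val (chi (inord i)).

Fixpoint L (k : nat) : seq nat := if k is k'.+1 then fc k' :: L k' else [::].

Lemma size_L k : size (L k) = k.
Proof. by elim: k => //= k ->. Qed.

Lemma nth_L k j : j < k -> nth 3 (L k) j = fc (k.-1 - j).
Proof.
elim: k j => // k IH [|j] /= Hj; first by rewrite subn0.
rewrite IH //; case: k IH Hj => // k _ Hj /=.
Qed.

Lemma fc_lt3 i : fc i < 3.
Proof. exact: ltn_ord. Qed.

Lemma ok_L k : k < 68 -> okc (fc k) (L k).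
Proof.
move=> Hk; rewrite okcE; apply/allP => s /mapP [x _ ->].
have s0 : 0 < x.+1 ^ 2 by rewrite expn_gt0.
move: s0; set q := x.+1 ^ 2 => s0.
case: (ltnP q.-1 k) => Hs.
- rewrite nth_L //.
  have -> : k.-1 - q.-1 = k - q by lia.
  apply/eqP => E; apply: H.
  exists (inord (k - q)), (inord k).
  rewrite !inordK; [|lia|lia].
  split; first by lia.
  split; first by apply: val_inj; exact: E.
  exists (x.+1); split => //; rewrite subKn //; lia.
- rewrite nth_default; last by rewrite size_L.
  by rewrite eq_sym neq_ltn fc_lt3.
Qed.

Lemma refute_sound fuel k : k + fuel <= 58 -> refute fuel (L k) = false.
Proof.
elim: fuel k => // f IH k Hk /=.
have Hk68 : k < 68 by lia.
have Hc := ok_L k Hk68.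
have Hr : refute f (fc k :: L k) = false by apply: (IH k.+1); rewrite addSn -addnS.
have := fc_lt3 k.
case E: (fc k) => [|[|[|]]] // _; rewrite E in Hc Hr;
  rewrite ?Hc ?Hr /= ?andbF //.
Qed.
End S.

Theorem theorem4p3 : vds_property 68 3.
Proof.
move=> chi; apply: Classical_Prop.NNPP => H.
by have := @refute_sound chi H 58 0 isT; rewrite refute58.
Qed.
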